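(* Suppose that $2\le n_0<\infty$, that $S$ is submultiplicative on $[1,n_0]$, and that $S(n_0)=K\ge 2$. Then there exist $N_0>n_0$ and an extension of $S$ to $[1,N_0]$ which is submultiplicative on $[1,N_0]$ and satisfies $S(N_0)\ge 3K/2$.
   Context: Let $2\le n_0\le\infty$ and let $S$ be a real-valued function on $[1,n_0]$ (on $[1,\infty)$ if $n_0=\infty$). $S$ is called submultiplicative on $[1,n_0]$ if: (a) $S$ is piecewise-linear, continuous, strictly increasing and concave; (b) $S(x)=x$ for $1\le x\le 2$; (c) $S(xy)\le S(x)S(y)$ for all $x,y$ with $1\le x,y,xy\le n_0$. *)

(* Defs.v *)
From Stdlib Require Import Reals Lra.
Open Scope R_scope.

Definition piecewise_linear_on (S : R -> R) (a b : R) : Prop :=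
  exists (k : nat) (p : nat -> R),
    p 0%nat = a /\ p k = b /\
    (forall i : nat, (i < k)%nat -> p i < p (Datatypes.S i)) /\
    (forall i : nat, (i < k)%nat ->
       exists m c : R, forall t : R, p i <= t <= p (Datatypes.S i) -> S t = m * t + c).

Definition continuous_on_interval (S : R -> R) (a b : R) : Prop :=
  forall x : R, a <= x <= b ->
  forall eps : R, 0 < eps -> exists delta : R, 0 < delta /\
    forall y : R, a <= y <= b -> Rabs (y - x) < delta -> Rabs (S y - S x) < eps.

Definition strictly_increasing_on (S : R -> R) (a b : R) : Prop :=
  forall x y : R, a <= x <= b -> a <= y <= b -> x < y -> S x < S y.

Definition concave_on (S : R -> R) (a b : R) : Prop :=
  forall x y t : R, a <= x <= b -> a <= y <= b -> 0 <= t <= 1 ->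
    t * S x + (1 - t) * S y <= S (t * x + (1 - t) * y).

Definition submultiplicative_on (S : R -> R) (n0 : R) : Prop :=
  piecewise_linear_on S 1 n0 /\
  continuous_on_interval S 1 n0 /\
  strictly_increasing_on S 1 n0 /\
  concave_on S 1 n0 /\
  (forall x : R, 1 <= x <= 2 -> S x = x) /\
  (forall x y : R, 1 <= x -> 1 <= y -> 1 <= x * y <= n0 -> S (x * y) <= S x * S y).

(* Main.v *)
Require Import Defs.
From Stdlib Require Import Reals Lra Lia Psatz.
Open Scope R_scope.

Lemma concave3 (S:R->R) n0 a b c : concave_on S 1 n0 -> 1<=a -> a<c -> c<=n0 -> a<=b<=c ->
  (c-b)*S a + (b-a)*S c <= (c-a)*S b.
Proof.
  intros Hc Ha Hac Hcn Hb.
  set (t := (c-b)/(c-a)).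
  assert (Ht: 0 <= t <= 1).
  { unfold t; split.
    - unfold Rdiv; apply Rmult_le_pos; [lra| left; apply Rinv_0_lt_compat; lra].
    - apply Rmult_le_reg_r with (c-a); [lra|]. unfold Rdiv. rewrite Rmult_assoc, Rinv_l; lra. }
  pose proof (Hc a c t ltac:(lra) ltac:(lra) Ht) as H.
  assert (E: t*a+(1-t)*c = b) by (unfold t; field; lra).
  rewrite E in H.
  assert (E2: (c-b)*S a + (b-a)*S c = (c-a)*(t*S a + (1-t)*S c)) by (unfold t; field; lra).
  rewrite E2. apply Rmult_le_compat_l; lra.
Qed.

Lemma smono (S:R->R) n0 x y : strictly_increasing_on S 1 n0 -> 1<=x -> x<=y -> y<=n0 -> S x <= S y.
Proof. intros H ? ? ?. destruct (Req_dec x y). subst; lra. left; apply H; lra. Qed.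

Lemma part_mono (p:nat->R) k : (forall i, (i<k)%nat -> p i < p (Datatypes.S i)) ->
  forall j, (j <= k)%nat -> forall i, (i <= j)%nat -> p i <= p j.
Proof.
  intros H j. induction j; intros Hj i Hi.
  - assert (i = 0%nat) by lia. subst; lra.
  - destruct (Nat.eq_dec i (Datatypes.S j)). subst; lra.
    pose proof (IHj ltac:(lia) i ltac:(lia)). pose proof (H j ltac:(lia)). lra.
Qed.

Lemma last_slope (S:R->R) n0 : 2 <= n0 -> submultiplicative_on S n0 ->
  exists m0, 0 < m0 /\ forall x, 1<=x<=n0 -> m0*(n0-x) <= S n0 - S x.
Proof.
  intros Hn [Hpl [Hct [Hsi [Hcc [Hid Hsm]]]]].
  destruct Hpl as [k [p [H0 [Hk [Hinc Haff]]]]].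
  destruct k as [|k]. { rewrite H0 in Hk. lra. }
  set (q := p k).
  assert (Hq1: 1 <= q). { rewrite <- H0. apply (part_mono p (Datatypes.S k) Hinc); lia. }
  assert (Hqn: q < n0). { rewrite <- Hk. apply Hinc. lia. }
  destruct (Haff k ltac:(lia)) as [a [c Hac]].
  fold q in Hac. rewrite Hk in Hac.
  assert (Ha: S n0 = a*n0+c) by (apply Hac; lra).
  assert (Hqq: S q = a*q+c) by (apply Hac; lra).
  assert (HSq: S q < S n0) by (apply Hsi; lra).
  exists a. split. { nra. }
  intros x Hx. destruct (Rle_dec q x).
  - rewrite Ha, (Hac x ltac:(lra)). lra.
  - pose proof (concave3 S n0 x q n0 Hcc ltac:(lra) ltac:(lra) ltac:(lra) ltac:(lra)) as C.
    nra.
Qed.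

Lemma mid_slope (S:R->R) n0 : 2 <= n0 -> submultiplicative_on S n0 ->
  exists m, 0 < m /\ forall a x, 1<=a<=n0/2 -> a<=x<=n0 -> m*(x-a) <= S x - S a.
Proof.
  intros Hn [Hpl [Hct [Hsi [Hcc [Hid Hsm]]]]].
  set (h := n0/2).
  assert (HSh: S h < S n0) by (apply Hsi; unfold h; lra).
  exists ((S n0 - S h)/(n0-h)). split.
  { apply Rdiv_lt_0_compat; unfold h in *; lra. }
  intros a x Ha Hx. fold h in Ha.
  pose proof (concave3 S n0 a x n0 Hcc ltac:(lra) ltac:(unfold h in *; lra) ltac:(lra) ltac:(lra)) as C1.
  pose proof (concave3 S n0 a h n0 Hcc ltac:(lra) ltac:(unfold h in *; lra) ltac:(lra) ltac:(unfold h in *;lra)) as C2.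
  set (r := (S n0 - S a)/(n0-a)).
  assert (Hr: r*(n0-a) = S n0 - S a) by (unfold r; field; unfold h in *; lra).
  assert (A: r*(x-a) <= S x - S a).
  { assert ((n0-a)*(r*(x-a)) <= (n0-a)*(S x - S a)) by nra.
    apply Rmult_le_reg_l with (n0-a); unfold h in *; lra. }
  set (m := (S n0 - S h)/(n0-h)).
  assert (Hm: m*(n0-h) = S n0 - S h) by (unfold m; field; unfold h in *; lra).
  assert (B: m <= r).
  { apply Rmult_le_reg_r with ((n0-h)*(n0-a)). unfold h in *; nra.
    nra. }
  nra.
Qed.

Definition ext (S:R->R) n0 K eps x := if Rle_dec x n0 then S x else K + eps*(x-n0).

Definition hyps S n0 K eps := 2 <= n0 /\ submultiplicative_on S n0 /\ S n0 = K /\ 2 <= K /\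
  0 < eps /\ eps*n0 <= 1 /\ (forall x, 1<=x<=n0 -> eps*(n0-x) <= K - S x) /\
  (forall a x, 1<=a<=n0/2 -> a<=x<=n0 -> eps*n0*(x-a) <= S x - S a).

Lemma ext_le S n0 K eps x : x <= n0 -> ext S n0 K eps x = S x.
Proof. intros; unfold ext; destruct Rle_dec; lra. Qed.

Lemma ext_ge S n0 K eps x : S n0 = K -> n0 <= x -> ext S n0 K eps x = K + eps*(x-n0).
Proof. intros; unfold ext; destruct Rle_dec; [replace x with n0 by lra; lra | lra]. Qed.

Lemma ext_L S n0 K eps x : hyps S n0 K eps -> 1 <= x -> ext S n0 K eps x <= K + eps*(x-n0).
Proof.
  intros (Hn&Hs&HK&HK2&He&Hen&Hsl&Hms) Hx. unfold ext; destruct Rle_dec; [|lra].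
  pose proof (Hsl x ltac:(lra)). lra.
Qed.

Lemma ext_mono S n0 K eps x y : hyps S n0 K eps -> 1 <= x -> x <= y -> ext S n0 K eps x <= ext S n0 K eps y.
Proof.
  intros H Hx Hxy. pose proof H as (Hn&Hs&HK&HK2&He&Hen&Hsl&Hms).
  destruct Hs as (_&_&Hsi&_).
  destruct (Rle_dec y n0).
  - rewrite !ext_le by lra. apply (smono S n0 x y Hsi); lra.
  - rewrite (ext_ge S n0 K eps y) by lra.
    destruct (Rle_dec x n0).
    + rewrite ext_le by lra. pose proof (smono S n0 x n0 Hsi); nra.
    + rewrite ext_ge by lra. nra.
Qed.

Lemma ext_ge2 S n0 K eps y : hyps S n0 K eps -> 2 <= y -> 2 <= ext S n0 K eps y.
Proof.
  intros H Hy. pose proof H as (Hn&Hs&HK&HK2&He&Hen&Hsl&Hms).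
  pose proof (ext_mono S n0 K eps 2 y H ltac:(lra) Hy).
  rewrite ext_le in H0 by lra. destruct Hs as (_&_&_&_&Hid&_). rewrite Hid in H0; lra.
Qed.

Lemma ext_pl S n0 K eps N0 : hyps S n0 K eps -> n0 < N0 -> piecewise_linear_on (ext S n0 K eps) 1 N0.
Proof.
  intros H HN. pose proof H as (Hn&Hs&HK&HK2&He&Hen&Hsl&Hms).
  destruct Hs as ((k&p&H0&Hk&Hinc&Haff)&_).
  exists (Datatypes.S k), (fun i => if Nat.leb i k then p i else N0).
  split; [exact H0|]. rewrite (proj2 (Nat.leb_gt (Datatypes.S k) k) ltac:(lia)). split; [reflexivity|].
  assert (Hpn: forall i, (i <= k)%nat -> p i <= n0).
  { intros i Hi. rewrite <- Hk. apply (part_mono p k Hinc); lia. }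
  split.
  - intros i Hi. destruct (Nat.leb_spec i k); [|lia].
    destruct (Nat.leb_spec (Datatypes.S i) k).
    + apply Hinc; lia.
    + assert (i = k) by lia. subst i. lra.
  - intros i Hi. destruct (Nat.leb_spec i k); [|lia].
    destruct (Nat.leb_spec (Datatypes.S i) k).
    + destruct (Haff i ltac:(lia)) as (a&c&Hac). exists a, c. intros t Ht.
      pose proof (Hpn _ H2). rewrite ext_le by lra. apply Hac; lra.
    + assert (i = k) by lia. subst i. rewrite Hk. exists eps, (K - eps*n0).
      intros t Ht. rewrite ext_ge by lra. ring.
Qed.

Lemma ext_cont S n0 K eps N0 : hyps S n0 K eps -> continuous_on_interval (ext S n0 K eps) 1 N0.
Proof.
  intros H. pose proof H as (Hn&Hs&HK&HK2&He&Hen&Hsl&Hms).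
  destruct Hs as (_&Hc&_).
  intros x Hx e He0.
  assert (He2: 0 < e/2) by lra.
  set (x1 := Rmin x n0).
  assert (Hx1: 1 <= x1 <= n0) by (unfold x1; unfold Rmin; destruct Rle_dec; lra).
  destruct (Hc x1 Hx1 (e/2) He2) as (d&Hd&Hcd).
  exists (Rmin d (e/(2*eps))). split.
  { apply Rmin_glb_lt; [lra|]. apply Rdiv_lt_0_compat; lra. }
  intros y Hy Hxy.
  assert (Hd1: Rabs (y-x) < d) by (eapply Rlt_le_trans; [exact Hxy| apply Rmin_l]).
  assert (Hd2: Rabs (y-x) < e/(2*eps)) by (eapply Rlt_le_trans; [exact Hxy| apply Rmin_r]).
  assert (Hd3: eps * Rabs (y-x) < e/2).
  { apply Rmult_lt_compat_l with (r:=eps) in Hd2; [|lra].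
    replace (eps*(e/(2*eps))) with (e/2) in Hd2 by (field; lra). exact Hd2. }
  destruct (Rle_dec x n0) as [Hxn|Hxn]; destruct (Rle_dec y n0) as [Hyn|Hyn].
  - assert (x1 = x) by (unfold x1; apply Rmin_left; lra). subst x1; rewrite H0 in Hcd.
    rewrite !ext_le by lra. assert (Hy1: 1<=y<=n0) by lra. pose proof (Hcd y Hy1 Hd1). lra.
  - assert (x1 = x) by (unfold x1; apply Rmin_left; lra). subst x1; rewrite H0 in Hcd.
    rewrite (ext_le S n0 K eps x) by lra. rewrite (ext_ge S n0 K eps y) by lra.
    rewrite Rabs_right in Hd1, Hd3 by lra.
    assert (Hy1: 1<=n0<=n0) by lra. assert (Hy2: Rabs (n0-x) < d) by (rewrite Rabs_right; lra). pose proof (Hcd n0 Hy1 Hy2) as H1.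
    rewrite HK in H1. apply Rabs_def2 in H1.
    apply Rabs_def1; nra.
  - assert (x1 = n0) by (unfold x1; apply Rmin_right; lra). subst x1; rewrite H0 in Hcd.
    rewrite (ext_le S n0 K eps y) by lra. rewrite (ext_ge S n0 K eps x) by lra.
    rewrite Rabs_left in Hd1, Hd3 by lra.
    assert (Hy1: 1<=y<=n0) by lra. assert (Hy2: Rabs (y-n0) < d) by (rewrite Rabs_left1; lra). pose proof (Hcd y Hy1 Hy2) as H1.
    rewrite HK in H1. apply Rabs_def2 in H1.
    apply Rabs_def1; nra.
  - rewrite !ext_ge by lra.
    replace (K + eps*(y-n0) - (K + eps*(x-n0))) with (eps*(y-x)) by ring.
    rewrite Rabs_mult, Rabs_right by lra. lra.
Qed.

Lemma ext_sinc S n0 K eps N0 : hyps S n0 K eps -> strictly_increasing_on (ext S n0 K eps) 1 N0.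
Proof.
  intros H. pose proof H as (Hn&Hs&HK&HK2&He&Hen&Hsl&Hms).
  destruct Hs as (_&_&Hsi&_).
  intros x y Hx Hy Hxy.
  destruct (Rle_dec y n0).
  - rewrite !ext_le by lra. apply Hsi; lra.
  - rewrite (ext_ge S n0 K eps y) by lra.
    destruct (Rle_dec x n0).
    + rewrite ext_le by lra. pose proof (smono S n0 x n0 Hsi); nra.
    + rewrite ext_ge by lra. nra.
Qed.

Lemma mixed S n0 K eps N0 x y t : hyps S n0 K eps -> 1 <= x <= n0 -> n0 <= y <= N0 -> 0 <= t <= 1 ->
  t * ext S n0 K eps x + (1-t) * ext S n0 K eps y <= ext S n0 K eps (t*x + (1-t)*y).
Proof.
  intros H Hx Hy Ht. pose proof H as (Hn&Hs&HK&HK2&He&Hen&Hsl&Hms).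
  destruct Hs as (_&_&_&Hcc&_).
  set (z := t*x+(1-t)*y).
  assert (Hzx: x <= z) by (unfold z; nra).
  rewrite (ext_ge S n0 K eps y) by lra.
  destruct (Rle_dec n0 z).
  - rewrite (ext_ge S n0 K eps z) by lra.
    pose proof (ext_L S n0 K eps x H ltac:(lra)).
    assert (t * ext S n0 K eps x <= t*(K + eps*(x-n0))) by (apply Rmult_le_compat_l; lra).
    unfold z. nra.
  - rewrite (ext_le S n0 K eps x) by lra. rewrite (ext_le S n0 K eps z) by lra.
    set (u := (n0 - z)/(n0-x)).
    assert (Hu: 0 <= u <= 1).
    { unfold u; split.
      - unfold Rdiv; apply Rmult_le_pos; [lra| left; apply Rinv_0_lt_compat; lra].
      - apply Rmult_le_reg_r with (n0-x); [lra|]. unfold Rdiv. rewrite Rmult_assoc, Rinv_l; lra. }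
    pose proof (Hcc x n0 u ltac:(lra) ltac:(lra) Hu) as C.
    assert (E: u*x+(1-u)*n0 = z) by (unfold u; field; lra).
    rewrite E, HK in C.
    assert (E2: (1-t)*(y-n0) = (t-u)*(n0-x)) by (unfold u, z; field; lra).
    assert (Htu: 0 <= t-u).
    { assert (0 <= (1-t)*(y-n0)) by nra. assert (n0 - x > 0) by lra.
      destruct (Rle_dec 0 (t-u)); [lra|]. nra. }
    pose proof (Hsl x ltac:(lra)).
    assert ((t-u)*(eps*(n0-x)) <= (t-u)*(K - S x)) by (apply Rmult_le_compat_l; lra).
    assert ((1-t)*(eps*(y-n0)) = (t-u)*(eps*(n0-x))) by (replace ((1-t)*(eps*(y-n0))) with (eps*((1-t)*(y-n0))) by ring; rewrite E2; ring).
    nra.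
Qed.

Lemma ext_conc S n0 K eps N0 : hyps S n0 K eps -> concave_on (ext S n0 K eps) 1 N0.
Proof.
  intros H. pose proof H as (Hn&Hs&HK&HK2&He&Hen&Hsl&Hms).
  destruct Hs as (_&_&_&Hcc&_).
  intros x y t Hx Hy Ht.
  destruct (Rle_dec x n0); destruct (Rle_dec y n0).
  - assert (t*x+(1-t)*y <= n0) by nra.
    rewrite (ext_le S n0 K eps x) by lra. rewrite (ext_le S n0 K eps y) by lra.
    rewrite (ext_le S n0 K eps (t*x+(1-t)*y)) by lra. apply Hcc; lra.
  - apply (mixed S n0 K eps N0); try assumption; lra.
  - pose proof (mixed S n0 K eps N0 y x (1-t) H) as M.
    assert (A1: 1 <= y <= n0) by lra. assert (A2: n0 <= x <= N0) by lra. assert (A3: 0 <= 1-t <= 1) by lra.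
    specialize (M A1 A2 A3).
    replace (1-(1-t)) with t in M by ring.
    replace (t*x+(1-t)*y) with ((1-t)*y+t*x) by ring. lra.
  - assert (n0 <= t*x+(1-t)*y) by nra.
    rewrite (ext_ge S n0 K eps x) by lra. rewrite (ext_ge S n0 K eps y) by lra.
    rewrite (ext_ge S n0 K eps (t*x+(1-t)*y)) by lra. nra.
Qed.

Lemma sub_half S n0 K eps N0 x y : hyps S n0 K eps -> eps*(N0-n0) = K/2 ->
  1 <= x -> 1 <= y <= 2 -> n0 < x*y <= N0 ->
  ext S n0 K eps (x*y) <= ext S n0 K eps x * ext S n0 K eps y.
Proof.
  intros H HN Hx Hy Hxy. pose proof H as (Hn&Hs&HK&HK2&He&Hen&Hsl&Hms).
  destruct Hs as (_&_&_&_&Hid&Hsm).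
  rewrite (ext_ge S n0 K eps (x*y)) by lra.
  rewrite (ext_le S n0 K eps y) by lra. rewrite Hid by lra.
  destruct (Rle_dec x n0).
  - rewrite ext_le by lra.
    set (w := n0/x).
    assert (Hw: x*w = n0) by (unfold w; field; lra).
    assert (Hw1: 1 <= w <= 2).
    { unfold w; split.
      - apply Rmult_le_reg_r with x; [lra|]. unfold Rdiv. rewrite Rmult_assoc, Rinv_l; lra.
      - apply Rmult_le_reg_r with x; [lra|]. unfold Rdiv. rewrite Rmult_assoc, Rinv_l; nra. }
    pose proof (Hsm x w ltac:(lra) ltac:(lra) ltac:(lra)) as M.
    rewrite Hw, HK, (Hid w Hw1) in M.
    assert (M2: K*x <= S x * n0) by (rewrite <- Hw; nra).
    assert (w < y) by nra.
    assert (S x * y * n0 >= K*(x*y)) by nra.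
    assert (eps*n0*(x*y-n0) <= K*(x*y - n0)) by nra.
    nra.
  - rewrite ext_ge by lra. nra.
Qed.

Lemma ext_sub S n0 K eps N0 : hyps S n0 K eps -> eps*(N0-n0) = K/2 ->
  forall x y, 1 <= x -> 1 <= y -> 1 <= x*y <= N0 ->
  ext S n0 K eps (x*y) <= ext S n0 K eps x * ext S n0 K eps y.
Proof.
  intros H HN x y Hx Hy Hxy. pose proof H as (Hn&Hs&HK&HK2&He&Hen&Hsl&Hms).
  destruct Hs as (_&_&Hsi&_&Hid&Hsm).
  assert (Hxle: x <= x*y) by nra. assert (Hyle: y <= x*y) by nra.
  destruct (Rle_dec (x*y) n0).
  - rewrite !ext_le by lra. apply Hsm; lra.
  - destruct (Rle_dec y 2).
    { apply (sub_half S n0 K eps N0); try assumption; lra. }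
    destruct (Rle_dec x 2).
    { rewrite (Rmult_comm x y), (Rmult_comm (ext S n0 K eps x)).
      apply (sub_half S n0 K eps N0); try assumption; try rewrite (Rmult_comm y x); lra. }
    assert (Htop: ext S n0 K eps (x*y) <= 3*K/2).
    { pose proof (ext_L S n0 K eps (x*y) H ltac:(lra)). nra. }
    destruct (Rle_dec x n0) as [Hxn|Hxn].
    2:{ rewrite (ext_ge S n0 K eps x) by lra.
        assert (Y2: 2 <= y) by lra. pose proof (ext_ge2 S n0 K eps y H Y2). assert (Kx: K <= K + eps*(x-n0)) by nra.
        assert (2*K <= (K + eps*(x-n0)) * ext S n0 K eps y) by nra. lra. }
    destruct (Rle_dec y n0) as [Hyn|Hyn].
    2:{ rewrite (ext_ge S n0 K eps y) by lra.
        assert (Y2: 2 <= x) by lra. pose proof (ext_ge2 S n0 K eps x H Y2). assert (Kx: K <= K + eps*(y-n0)) by nra.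
        assert (2*K <= ext S n0 K eps x * (K + eps*(y-n0))) by nra. lra. }
    rewrite (ext_ge S n0 K eps (x*y)) by lra.
    rewrite (ext_le S n0 K eps x) by lra. rewrite (ext_le S n0 K eps y) by lra.
    set (x' := n0/y).
    assert (Hx'y: x'*y = n0) by (unfold x'; field; lra).
    assert (Hx'1: 1 <= x' <= n0/2).
    { unfold x'; split.
      - apply Rmult_le_reg_r with y; [lra|]. unfold Rdiv. rewrite Rmult_assoc, Rinv_l; lra.
      - apply Rmult_le_reg_r with y; [lra|]. unfold Rdiv. rewrite Rmult_assoc, Rinv_l by lra. nra. }
    assert (Hx'x: x' <= x) by nra.
    pose proof (Hms x' x Hx'1 ltac:(lra)) as M1.
    assert (A1: 1 <= x' * y <= n0) by lra.
    pose proof (Hsm x' y ltac:(lra) ltac:(lra) A1) as M2.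
    rewrite Hx'y, HK in M2.
    assert (Sy2: 2 <= S y).
    { rewrite <- (Hid 2) by lra. apply (smono S n0 2 y Hsi); lra. }
    assert (E: x*y - n0 = y*(x-x')) by (rewrite <- Hx'y; ring).
    assert (Q1: eps*(x*y-n0) <= eps*n0*(x-x')) by (rewrite E; replace (eps*n0*(x-x')) with (eps*(n0*(x-x'))) by ring;
        apply Rmult_le_compat_l; [lra|]; apply Rmult_le_compat_r; lra).
    assert (Q2: (S x - S x') * S y >= eps*n0*(x-x') * 2).
    { assert (0 <= eps*n0*(x-x')) by (apply Rmult_le_pos; [apply Rmult_le_pos|]; lra).
      assert (eps*n0*(x-x') * 2 <= eps*n0*(x-x') * S y) by (apply Rmult_le_compat_l; lra).
      assert (eps*n0*(x-x') * S y <= (S x - S x') * S y) by (apply Rmult_le_compat_r; lra).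
      lra. }
    nra.
Qed.
Theorem lemma2p4 (n0 : R) (S : R -> R) (K : R) :
  2 <= n0 ->
  submultiplicative_on S n0 ->
  S n0 = K -> 2 <= K ->
  exists (N0 : R) (S' : R -> R),
    n0 < N0 /\
    (forall x : R, 1 <= x <= n0 -> S' x = S x) /\
    submultiplicative_on S' N0 /\
    3 * K / 2 <= S' N0.
Proof.
  intros Hn Hs HK HK2.
  destruct (last_slope S n0 Hn Hs) as (m0&Hm0&Hsl).
  destruct (mid_slope S n0 Hn Hs) as (m&Hm&Hms).
  set (r := Rmin m0 (Rmin m 1)).
  assert (Hr0: 0 < r) by (unfold r; repeat apply Rmin_glb_lt; lra).
  assert (Hr1: r <= m0) by (unfold r; apply Rmin_l).
  assert (Hr2: r <= m) by (unfold r; eapply Rle_trans; [apply Rmin_r| apply Rmin_l]).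
  assert (Hr3: r <= 1) by (unfold r; eapply Rle_trans; [apply Rmin_r| apply Rmin_r]).
  set (eps := r / n0).
  assert (He: eps * n0 = r) by (unfold eps; field; lra).
  assert (He0: 0 < eps) by (unfold eps; apply Rdiv_lt_0_compat; lra).
  assert (H: hyps S n0 K eps).
  { unfold hyps. split; [lra|]. split; [exact Hs|]. split; [exact HK|]. split; [lra|].
    split; [lra|]. split; [lra|]. split.
    - intros x Hx. rewrite <- HK. pose proof (Hsl x Hx).
      assert (eps <= m0) by nra.
      assert (eps*(n0-x) <= m0*(n0-x)) by (apply Rmult_le_compat_r; lra). lra.
    - intros a x Ha Hx. rewrite He. pose proof (Hms a x Ha Hx).
      assert (r*(x-a) <= m*(x-a)) by (apply Rmult_le_compat_r; lra). lra. }
  set (N0 := n0 + K/(2*eps)).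
  assert (HN: eps*(N0-n0) = K/2) by (unfold N0; field; lra).
  assert (HN0: n0 < N0) by (unfold N0; assert (0 < K/(2*eps)) by (apply Rdiv_lt_0_compat; lra); lra).
  exists N0, (ext S n0 K eps).
  split; [exact HN0|]. split.
  { intros x Hx. apply ext_le; lra. }
  split.
  - unfold submultiplicative_on. split; [apply ext_pl; assumption|].
    split; [apply ext_cont; assumption|].
    split; [apply ext_sinc; assumption|].
    split; [apply ext_conc; assumption|].
    split.
    + intros x Hx. rewrite ext_le by lra. destruct Hs as (_&_&_&_&Hid&_). apply Hid; lra.
    + apply (ext_sub S n0 K eps N0 H HN).
  - rewrite ext_ge by lra. lra.
Qed.
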